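(* Let $K=(\mathbf{k}_1,\dots,\mathbf{k}_6)\in(\mathbb{R}^2)^6$ be a 3-RPR configuration whose base anchor points $\mathbf{k}_1,\mathbf{k}_2,\mathbf{k}_3\in\mathbb{R}^2$ are fixed and whose platform anchor points are $\mathbf{k}_j=\mathbf{R}\mathbf{p}_j+\mathbf{t}$ ($j=4,5,6$) for fixed $\mathbf{p}_4,\mathbf{p}_5,\mathbf{p}_6\in\mathbb{R}^2$ and a pose $(\mathbf{R},\mathbf{t})$ with $\mathbf{R}\in SO(2)$, $\mathbf{t}\in\mathbb{R}^2$. Let $D$ be either $D^{\vartriangle}_{\blacktriangle}$ or $D^{\vartriangle}_{\vartriangle}$. If $K'=(\mathbf{k}'_1,\dots,\mathbf{k}'_6)$ is a closest configuration to $K$ on the collinearity variety $C_P=0$, i.e. a global minimizer of $D(K,K')$ over all $K'\in\mathbb{R}^{12}$ with $C_P(K')=0$, then $\mathbf{k}'_4,\mathbf{k}'_5,\mathbf{k}'_6$ are the pedal points (orthogonal projections) of $\mathbf{k}_4,\mathbf{k}_5,\mathbf{k}_6$ on the line of regression of $\mathbf{k}_4,\mathbf{k}_5,\mathbf{k}_6$. Moreover, the distance $\min\{D(K,K'):C_P(K')=0\}$ depends only on the geometry of the manipulator, i.e. it is independent of the pose $(\mathbf{R},\mathbf{t})$.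
   Context: A configuration is $K'=(\mathbf{k}'_1,\dots,\mathbf{k}'_6)$ with $\mathbf{k}'_i=(c_i,d_i)^T\in\mathbb{R}^2$, viewed as a point of $\mathbb{R}^{12}$. For indices $i,j$ define the segment distance $d(\vert_{ij},\vert'_{ij})^2=\frac13\big[\|\mathbf{k}_i-\mathbf{k}'_i\|^2+\|\mathbf{k}_j-\mathbf{k}'_j\|^2+(\mathbf{k}_i-\mathbf{k}'_i)^T(\mathbf{k}_j-\mathbf{k}'_j)\big]$ and for $\{i,j,k\}$ the triangle distance $d(\blacktriangle_{ijk},\blacktriangle'_{ijk})^2=\frac16\big[\sum_{x=i,j,k}\|\mathbf{k}_x-\mathbf{k}'_x\|^2+(\mathbf{k}_i-\mathbf{k}'_i)^T(\mathbf{k}_k-\mathbf{k}'_k)+(\mathbf{k}_i-\mathbf{k}'_i)^T(\mathbf{k}_j-\mathbf{k}'_j)+(\mathbf{k}_k-\mathbf{k}'_k)^T(\mathbf{k}_j-\mathbf{k}'_j)\big]$. Then $D^{\vartriangle}_{\blacktriangle}(K,K')^2=\frac17\big[\sum_{(i,j)\in I_2}d(\vert_{ij},\vert'_{ij})^2+d(\blacktriangle_{123},\blacktriangle'_{123})^2\big]$ with $I_2=\{(1,4),(2,5),(3,6),(4,5),(4,6),(5,6)\}$, and $D^{\vartriangle}_{\vartriangle}(K,K')^2=\frac19\sum_{(i,j)\in I_4}d(\vert_{ij},\vert'_{ij})^2$ with $I_4=\{(1,2),(2,3),(1,3),(1,4),(2,5),(3,6),(4,5),(5,6),(4,6)\}$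 (distances are the nonnegative square roots). The collinearity polynomial of the platform is $C_P(K')=\det\begin{pmatrix}1&1&1\\ c_4&c_5&c_6\\ d_4&d_5&d_6\end{pmatrix}$. The line of regression of three points is the line minimizing the sum of squared orthogonal distances to these points; the pedal point of a point on a line is its orthogonal projection onto that line. *)

(* Defs.v *)
From Stdlib Require Import Reals.
Open Scope R_scope.

Definition point := (R * R)%type.

Definition vadd (x y : point) : point := (fst x + fst y, snd x + snd y).
Definition vsub (x y : point) : point := (fst x - fst y, snd x - snd y).
Definition vscale (a : R) (x : point) : point := (a * fst x, a * snd x).
Definition dot (x y : point) : R := fst x * fst y + snd x * snd y.
Definition norm2 (x : point) : R := dot x x.

(* A configuration K = (k_1,...,k_6) in (R^2)^6 = R^12; only the indices
   1..6 are ever used. *)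
Definition config := nat -> point.

Definition dlt (K K' : config) (i : nat) : point := vsub (K i) (K' i).

Definition seg_d2 (K K' : config) (i j : nat) : R :=
  / 3 * (norm2 (dlt K K' i) + norm2 (dlt K K' j) + dot (dlt K K' i) (dlt K K' j)).

Definition tri_d2 (K K' : config) (i j k : nat) : R :=
  / 6 * (norm2 (dlt K K' i) + norm2 (dlt K K' j) + norm2 (dlt K K' k)
         + dot (dlt K K' i) (dlt K K' k) + dot (dlt K K' i) (dlt K K' j)
         + dot (dlt K K' k) (dlt K K' j)).

Definition D_tri_filled (K K' : config) : R :=
  sqrt (/ 7 * (seg_d2 K K' 1 4 + seg_d2 K K' 2 5 + seg_d2 K K' 3 6
               + seg_d2 K K' 4 5 + seg_d2 K K' 4 6 + seg_d2 K K' 5 6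
               + tri_d2 K K' 1 2 3)).

Definition D_tri_tri (K K' : config) : R :=
  sqrt (/ 9 * (seg_d2 K K' 1 2 + seg_d2 K K' 2 3 + seg_d2 K K' 1 3
               + seg_d2 K K' 1 4 + seg_d2 K K' 2 5 + seg_d2 K K' 3 6
               + seg_d2 K K' 4 5 + seg_d2 K K' 5 6 + seg_d2 K K' 4 6)).

Inductive dist_kind := Kind_tri_filled | Kind_tri_tri.

Definition Dist (k : dist_kind) (K K' : config) : R :=
  match k with
  | Kind_tri_filled => D_tri_filled K K'
  | Kind_tri_tri => D_tri_tri K K'
  end.

(* collinearity polynomial of the platform:
   det [[1,1,1],[c4,c5,c6],[d4,d5,d6]] *)
Definition CP (K' : config) : R :=
  let '(c4, d4) := K' 4%nat in
  let '(c5, d5) := K' 5%nat in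
  let '(c6, d6) := K' 6%nat in
  (c5 * d6 - c6 * d5) - (c4 * d6 - c6 * d4) + (c4 * d5 - c5 * d4).

Definition is_closest (k : dist_kind) (K K' : config) : Prop :=
  CP K' = 0 /\ forall K'' : config, CP K'' = 0 -> Dist k K K' <= Dist k K K''.

(* Lines: {a + t u | t in R} with u <> 0. *)
Definition pedal (a u x : point) : point :=
  vadd a (vscale (dot (vsub x a) u / norm2 u) u).

Definition line_dist2 (a u x : point) : R := norm2 (vsub x (pedal a u x)).

Definition is_regression_line (x4 x5 x6 a u : point) : Prop :=
  u <> (0, 0) /\
  forall b v : point, v <> (0, 0) ->
    line_dist2 a u x4 + line_dist2 a u x5 + line_dist2 a u x6
    <= line_dist2 b v x4 + line_dist2 b v x5 + line_dist2 b v x6.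

Definition rot (c s : R) (x : point) : point :=
  (c * fst x - s * snd x, s * fst x + c * snd x).

Definition in_SO2 (c s : R) : Prop := c ^ 2 + s ^ 2 = 1.

Definition rpr_config (k1 k2 k3 p4 p5 p6 : point) (c s : R) (t : point) : config :=
  fun i => match i with
           | 1%nat => k1
           | 2%nat => k2
           | 3%nat => k3
           | 4%nat => vadd (rot c s p4) t
           | 5%nat => vadd (rot c s p5) t
           | 6%nat => vadd (rot c s p6) t
           | _ => (0, 0)
           end.

(* Main.v *)
Require Import Defs.
From Stdlib Require Import Reals Lra Nsatz.
Open Scope R_scope.

Definition alpha k := match k with Kind_tri_filled => 23/210 | Kind_tri_tri => 4/45 end.
Definition beta k := match k with Kind_tri_filled => 1/40 | Kind_tri_tri => 41/2160 end.
Definition pc k := match k with Kind_tri_filled => 7/20 | Kind_tri_tri => 7/40 end.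
Definition qc k := match k with Kind_tri_filled => -1/20 | Kind_tri_tri => -1/40 end.
Definition w1 k := match k with Kind_tri_filled => 5/84 | Kind_tri_tri => 5/54 end.
Definition w2 k := match k with Kind_tri_filled => 1/84 | Kind_tri_tri => 1/54 end.

Definition Fk k (d4 d5 d6 : point) : R :=
  alpha k * (norm2 d4 + norm2 d5 + norm2 d6) + beta k * norm2 (vadd (vadd d4 d5) d6).
Definition rk k (e1 e2 e3 : point) : R :=
  w1 k * (norm2 e1 + norm2 e2 + norm2 e3) + w2 k * norm2 (vadd (vadd e1 e2) e3).

Definition Qk (k : dist_kind) (K K' : config) : R :=
  match k with
  | Kind_tri_filled => / 7 * (seg_d2 K K' 1 4 + seg_d2 K K' 2 5 + seg_d2 K K' 3 6
               + seg_d2 K K' 4 5 + seg_d2 K K' 4 6 + seg_d2 K K' 5 6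
               + tri_d2 K K' 1 2 3)
  | Kind_tri_tri => / 9 * (seg_d2 K K' 1 2 + seg_d2 K K' 2 3 + seg_d2 K K' 1 3
               + seg_d2 K K' 1 4 + seg_d2 K K' 2 5 + seg_d2 K K' 3 6
               + seg_d2 K K' 4 5 + seg_d2 K K' 5 6 + seg_d2 K K' 4 6)
  end.

Lemma Dist_Qk k K K' : Dist k K K' = sqrt (Qk k K K').
Proof. destruct k; reflexivity. Qed.

Definition comb (p q : R) (x y z : point) : point := vadd (vscale p x) (vscale q (vadd y z)).

Definition fixb k (K K' : config) : config := fun i =>
  match i with
  | 1%nat => vadd (K 1%nat) (comb (pc k) (qc k) (dlt K K' 4) (dlt K K' 5) (dlt K K' 6))
  | 2%nat => vadd (K 2%nat) (comb (pc k) (qc k) (dlt K K' 5) (dlt K K' 4) (dlt K K' 6))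
  | 3%nat => vadd (K 3%nat) (comb (pc k) (qc k) (dlt K K' 6) (dlt K K' 4) (dlt K K' 5))
  | _ => K' i
  end.

Lemma Q_id k K K' :
  Qk k K K' = Fk k (dlt K K' 4) (dlt K K' 5) (dlt K K' 6)
   + rk k (vadd (dlt K K' 1) (comb (pc k) (qc k) (dlt K K' 4) (dlt K K' 5) (dlt K K' 6)))
          (vadd (dlt K K' 2) (comb (pc k) (qc k) (dlt K K' 5) (dlt K K' 4) (dlt K K' 6)))
          (vadd (dlt K K' 3) (comb (pc k) (qc k) (dlt K K' 6) (dlt K K' 4) (dlt K K' 5))).
Proof.
  destruct k; unfold Qk, Fk, rk, seg_d2, tri_d2, comb;
  generalize (dlt K K' 1) (dlt K K' 2) (dlt K K' 3) (dlt K K' 4) (dlt K K' 5) (dlt K K' 6);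
  intros [a1 a2] [b1 b2] [c1 c2] [d1 d2] [e1 e2] [f1 f2];
  unfold norm2, dot, vadd, vscale, alpha, beta, pc, qc, w1, w2; simpl; field.
Qed.
Lemma norm2_ge0 x : 0 <= norm2 x.
Proof. destruct x as [a b]; unfold norm2, dot; simpl; nra. Qed.

Lemma sq_sum_zero x y : x * x + y * y = 0 -> x = 0 /\ y = 0.
Proof. intro H. pose proof (Rle_0_sqr x). pose proof (Rle_0_sqr y). unfold Rsqr in *.
  assert (x * x = 0) by lra. assert (y * y = 0) by lra.
  split; [destruct (Rmult_integral _ _ H2)|destruct (Rmult_integral _ _ H3)]; auto. Qed.

Lemma norm2_zero p q : norm2 (vsub p q) = 0 -> p = q.
Proof. destruct p as [a b], q as [c d]; unfold norm2, dot, vsub; simpl; intro H.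
  destruct (sq_sum_zero _ _ H). f_equal; lra. Qed.

Lemma norm2_nz u : u <> (0,0) -> norm2 u <> 0.
Proof. destruct u as [a b]; unfold norm2, dot; simpl; intros H E. apply H.
  destruct (sq_sum_zero _ _ E). subst; reflexivity. Qed.

Lemma alpha_pos k : 0 < alpha k.
Proof. destruct k; simpl; lra. Qed.

Lemma Fk_ge k d4 d5 d6 : alpha k * (norm2 d4 + norm2 d5 + norm2 d6) <= Fk k d4 d5 d6.
Proof. unfold Fk. assert (0 <= beta k) by (destruct k; simpl; lra).
  pose proof (Rmult_le_pos _ _ H (norm2_ge0 (vadd (vadd d4 d5) d6))). lra. Qed.

Lemma rk_ge k a b c : 0 <= rk k a b c.
Proof. unfold rk. assert (0 <= w1 k) by (destruct k; simpl; lra).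
  assert (0 <= w2 k) by (destruct k; simpl; lra).
  pose proof (norm2_ge0 a). pose proof (norm2_ge0 b). pose proof (norm2_ge0 c).
  pose proof (Rmult_le_pos _ _ H (norm2_ge0 a)). pose proof (Rmult_le_pos _ _ H (norm2_ge0 b)).
  pose proof (Rmult_le_pos _ _ H (norm2_ge0 c)).
  pose proof (Rmult_le_pos _ _ H0 (norm2_ge0 (vadd (vadd a b) c))). lra. Qed.

Lemma Q_ge k K K' : Fk k (dlt K K' 4) (dlt K K' 5) (dlt K K' 6) <= Qk k K K'.
Proof. rewrite Q_id. pose proof (rk_ge k
  (vadd (dlt K K' 1) (comb (pc k) (qc k) (dlt K K' 4) (dlt K K' 5) (dlt K K' 6)))
  (vadd (dlt K K' 2) (comb (pc k) (qc k) (dlt K K' 5) (dlt K K' 4) (dlt K K' 6)))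
  (vadd (dlt K K' 3) (comb (pc k) (qc k) (dlt K K' 6) (dlt K K' 4) (dlt K K' 5)))). lra. Qed.

Lemma Q_fix k K K' : Qk k K (fixb k K K') = Fk k (dlt K K' 4) (dlt K K' 5) (dlt K K' 6).
Proof. rewrite Q_id.
  change (dlt K (fixb k K K') 4) with (dlt K K' 4).
  change (dlt K (fixb k K K') 5) with (dlt K K' 5).
  change (dlt K (fixb k K K') 6) with (dlt K K' 6).
  change (dlt K (fixb k K K') 1) with (vsub (K 1%nat) (vadd (K 1%nat) (comb (pc k) (qc k) (dlt K K' 4) (dlt K K' 5) (dlt K K' 6)))).
  change (dlt K (fixb k K K') 2) with (vsub (K 2%nat) (vadd (K 2%nat) (comb (pc k) (qc k) (dlt K K' 5) (dlt K K' 4) (dlt K K' 6)))).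
  change (dlt K (fixb k K K') 3) with (vsub (K 3%nat) (vadd (K 3%nat) (comb (pc k) (qc k) (dlt K K' 6) (dlt K K' 4) (dlt K K' 5)))).
  match goal with |- _ + ?r = _ => assert (E : r = 0) end.
  { unfold rk.
    generalize (K 1%nat) (K 2%nat) (K 3%nat) (comb (pc k) (qc k) (dlt K K' 4) (dlt K K' 5) (dlt K K' 6))
      (comb (pc k) (qc k) (dlt K K' 5) (dlt K K' 4) (dlt K K' 6))
      (comb (pc k) (qc k) (dlt K K' 6) (dlt K K' 4) (dlt K K' 5)).
    intros [a1 a2] [b1 b2] [c1 c2] [d1 d2] [e1 e2] [f1 f2].
    unfold norm2, dot, vadd, vsub; simpl; ring. }
  rewrite E; ring.
Qed.
Lemma Q_nonneg k K K' : 0 <= Qk k K K'.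
Proof. pose proof (Q_ge k K K'). pose proof (Fk_ge k (dlt K K' 4) (dlt K K' 5) (dlt K K' 6)).
  pose proof (alpha_pos k). pose proof (norm2_ge0 (dlt K K' 4)).
  pose proof (norm2_ge0 (dlt K K' 5)). pose proof (norm2_ge0 (dlt K K' 6)).
  pose proof (Rmult_le_pos (alpha k) (norm2 (dlt K K' 4) + norm2 (dlt K K' 5) + norm2 (dlt K K' 6)) ltac:(lra) ltac:(lra)). lra. Qed.

Lemma closest_le k K K' K'' : is_closest k K K' -> CP K'' = 0 -> Qk k K K' <= Qk k K K''.
Proof. intros [_ H] H2. specialize (H K'' H2). rewrite !Dist_Qk in H.
  apply sqrt_le_0; auto using Q_nonneg. Qed.

Lemma CP_fixb k K K' : CP (fixb k K K') = CP K'.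
Proof. reflexivity. Qed.

Definition cross (u w : point) : R := fst u * snd w - snd u * fst w.

Lemma ld_cross a u x : norm2 u <> 0 -> line_dist2 a u x = (cross u (vsub x a))^2 / norm2 u.
Proof. destruct a as [a1 a2], u as [u1 u2], x as [x1 x2].
  unfold line_dist2, pedal, cross, norm2, dot, vsub, vadd, vscale; simpl; intro H. field; auto. Qed.

Lemma pyth a u x y : norm2 u <> 0 ->
  norm2 (vsub x (pedal a u y)) = line_dist2 a u x + norm2 (vsub (pedal a u x) (pedal a u y)).
Proof. destruct a as [a1 a2], u as [u1 u2], x as [x1 x2], y as [y1 y2].
  unfold line_dist2, pedal, norm2, dot, vsub, vadd, vscale; simpl; intro H. field; auto. Qed.

Definition centroid (x4 x5 x6 : point) : point := vscale (/3) (vadd (vadd x4 x5) x6).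

Lemma centroid_le x4 x5 x6 b v : norm2 v <> 0 ->
  line_dist2 (centroid x4 x5 x6) v x4 + line_dist2 (centroid x4 x5 x6) v x5 + line_dist2 (centroid x4 x5 x6) v x6
  <= line_dist2 b v x4 + line_dist2 b v x5 + line_dist2 b v x6.
Proof. intro H. rewrite !(ld_cross _ _ _ H).
  assert (E : (cross v (vsub x4 b))^2 / norm2 v + (cross v (vsub x5 b))^2 / norm2 v + (cross v (vsub x6 b))^2 / norm2 v
    - ((cross v (vsub x4 (centroid x4 x5 x6)))^2 / norm2 v + (cross v (vsub x5 (centroid x4 x5 x6)))^2 / norm2 v
       + (cross v (vsub x6 (centroid x4 x5 x6)))^2 / norm2 v)
    = 3 * (cross v (vsub (centroid x4 x5 x6) b))^2 / norm2 v).
  { destruct x4, x5, x6, b, v. unfold cross, centroid, norm2, dot, vsub, vadd, vscale in *; simpl in *. field; auto. }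
  assert (0 <= 3 * (cross v (vsub (centroid x4 x5 x6) b))^2 / norm2 v).
  { apply Rmult_le_pos. pose proof (pow2_ge_0 (cross v (vsub (centroid x4 x5 x6) b))). lra.
    apply Rlt_le, Rinv_0_lt_compat. pose proof (norm2_ge0 v). lra. }
  lra. Qed.

Lemma sum_zero x4 x5 x6 v : norm2 v <> 0 ->
  let g := centroid x4 x5 x6 in
  norm2 (vadd (vadd (vsub x4 (pedal g v x4)) (vsub x5 (pedal g v x5))) (vsub x6 (pedal g v x6))) = 0.
Proof. intros H g. subst g. destruct x4, x5, x6, v.
  unfold centroid, pedal, norm2, dot, vsub, vadd, vscale in *; simpl in *.
  match goal with |- ?a * ?a + ?b * ?b = 0 => replace a with 0 by (field; auto); replace b with 0 by (field; auto) end. ring. Qed.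

Lemma CP_line (Y : config) a u z4 z5 z6 : norm2 u <> 0 ->
  Y 4%nat = pedal a u z4 -> Y 5%nat = pedal a u z5 -> Y 6%nat = pedal a u z6 -> CP Y = 0.
Proof. intros H H4 H5 H6. unfold CP. rewrite H4, H5, H6.
  destruct a, u, z4, z5, z6. unfold pedal, norm2, dot, vsub, vadd, vscale in *; simpl in *. field; auto. Qed.

Lemma pedal_on a u y : norm2 u <> 0 -> cross u (vsub y a) = 0 -> pedal a u y = y.
Proof. destruct a as [a1 a2], u as [u1 u2], y as [y1 y2].
  unfold pedal, cross, norm2, dot, vsub, vadd, vscale; simpl; intros H Hc.
  f_equal; apply Rminus_diag_uniq.
  - transitivity (u2 * (u1 * (y2 - a2) - u2 * (y1 - a1)) / (u1 * u1 + u2 * u2)).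
    field; auto. rewrite Hc. field; auto.
  - transitivity (- u1 * (u1 * (y2 - a2) - u2 * (y1 - a1)) / (u1 * u1 + u2 * u2)).
    field; auto. rewrite Hc. field; auto.
Qed.

Lemma on_line (Y : config) : CP Y = 0 -> exists a u, norm2 u <> 0 /\
  pedal a u (Y 4%nat) = Y 4%nat /\ pedal a u (Y 5%nat) = Y 5%nat /\ pedal a u (Y 6%nat) = Y 6%nat.
Proof. unfold CP. destruct (Y 4%nat) as [a1 a2], (Y 5%nat) as [b1 b2], (Y 6%nat) as [c1 c2].
  intro Hcp.
  assert (N10 : norm2 (1,0) <> 0) by (unfold norm2, dot; simpl; lra).
  destruct (Req_dec (norm2 (vsub (b1,b2) (a1,a2))) 0) as [E|E].
  - apply norm2_zero in E. injection E as -> ->.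
    destruct (Req_dec (norm2 (vsub (c1,c2) (a1,a2))) 0) as [F|F].
    + apply norm2_zero in F. injection F as -> ->.
      exists (a1,a2), (1,0). 
      assert (P : pedal (a1,a2) (1,0) (a1,a2) = (a1,a2)) by (apply pedal_on; auto; unfold cross, vsub; simpl; ring).
      rewrite P. auto.
    + exists (a1,a2), (vsub (c1,c2) (a1,a2)). repeat split; auto; apply pedal_on; auto;
      unfold cross, vsub; simpl; ring.
  - exists (a1,a2), (vsub (b1,b2) (a1,a2)). repeat split; auto; apply pedal_on; auto;
      unfold cross, vsub; simpl; try ring.
    rewrite <- Hcp. ring.
Qed.

Definition map_cfg c s (ta tb : point) (Y : config) : config :=
  fun i => vadd (rot c s (vsub (Y i) ta)) tb.

Lemma CP_map c s ta tb Y : CP (map_cfg c s ta tb Y) = (c^2 + s^2) * CP Y.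
Proof. unfold CP, map_cfg. destruct (Y 4%nat), (Y 5%nat), (Y 6%nat), ta, tb.
  unfold rot, vadd, vsub; simpl. ring. Qed.

Lemma rot_gen ca sa cb sb p ta tb y : in_SO2 ca sa ->
  vsub (vadd (rot cb sb p) tb) (vadd (rot (cb*ca+sb*sa) (sb*ca-cb*sa) (vsub y ta)) tb)
  = rot (cb*ca+sb*sa) (sb*ca-cb*sa) (vsub (vadd (rot ca sa p) ta) y).
Proof. unfold in_SO2; intro H. assert (H' : ca*ca+sa*sa = 1) by (rewrite <- H; ring).
  destruct p, ta, tb, y. unfold rot, vadd, vsub; simpl. f_equal; nsatz. Qed.

Lemma norm2_rot c s d : in_SO2 c s -> norm2 (rot c s d) = norm2 d.
Proof. unfold in_SO2; intro H. destruct d. unfold norm2, dot, rot; simpl.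
  transitivity ((c^2+s^2) * (r*r+r0*r0)). ring. rewrite H. ring. Qed.

Lemma vadd_rot c s x y : vadd (rot c s x) (rot c s y) = rot c s (vadd x y).
Proof. destruct x, y; unfold vadd, rot; simpl; f_equal; ring. Qed.

Lemma Fk_rot k c s d4 d5 d6 : in_SO2 c s ->
  Fk k (rot c s d4) (rot c s d5) (rot c s d6) = Fk k d4 d5 d6.
Proof. intro H. unfold Fk. rewrite !vadd_rot, !(norm2_rot _ _ _ H). reflexivity. Qed.

Lemma SO2_comp ca sa cb sb : in_SO2 ca sa -> in_SO2 cb sb ->
  in_SO2 (cb*ca+sb*sa) (sb*ca-cb*sa).
Proof. unfold in_SO2; intros Ha Hb.
  transitivity ((ca^2+sa^2)*(cb^2+sb^2)). ring. rewrite Ha, Hb. ring. Qed.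

Lemma transfer k k1 k2 k3 p4 p5 p6 ca sa ta cb sb tb (Y : config) :
  in_SO2 ca sa -> in_SO2 cb sb ->
  let Kb := rpr_config k1 k2 k3 p4 p5 p6 cb sb tb in
  let Z := fixb k Kb (map_cfg (cb*ca+sb*sa) (sb*ca-cb*sa) ta tb Y) in
  CP Z = CP Y /\ Qk k Kb Z <= Qk k (rpr_config k1 k2 k3 p4 p5 p6 ca sa ta) Y.
Proof. intros Ha Hb Kb Z. split.
  - unfold Z. rewrite CP_fixb, CP_map. rewrite (SO2_comp _ _ _ _ Ha Hb). ring.
  - unfold Z. rewrite Q_fix.
    assert (E4 : dlt Kb (map_cfg (cb*ca+sb*sa) (sb*ca-cb*sa) ta tb Y) 4 =
       rot (cb*ca+sb*sa) (sb*ca-cb*sa) (dlt (rpr_config k1 k2 k3 p4 p5 p6 ca sa ta) Y 4))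
      by (exact (rot_gen ca sa cb sb p4 ta tb (Y 4%nat) Ha)).
    assert (E5 : dlt Kb (map_cfg (cb*ca+sb*sa) (sb*ca-cb*sa) ta tb Y) 5 =
       rot (cb*ca+sb*sa) (sb*ca-cb*sa) (dlt (rpr_config k1 k2 k3 p4 p5 p6 ca sa ta) Y 5))
      by (exact (rot_gen ca sa cb sb p5 ta tb (Y 5%nat) Ha)).
    assert (E6 : dlt Kb (map_cfg (cb*ca+sb*sa) (sb*ca-cb*sa) ta tb Y) 6 =
       rot (cb*ca+sb*sa) (sb*ca-cb*sa) (dlt (rpr_config k1 k2 k3 p4 p5 p6 ca sa ta) Y 6))
      by (exact (rot_gen ca sa cb sb p6 ta tb (Y 6%nat) Ha)).
    rewrite E4, E5, E6, Fk_rot by (apply SO2_comp; auto). apply Q_ge.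
Qed.

Lemma part1 k (K K' : config) : is_closest k K K' ->
  exists a u : point,
    is_regression_line (K 4%nat) (K 5%nat) (K 6%nat) a u /\
    K' 4%nat = pedal a u (K 4%nat) /\ K' 5%nat = pedal a u (K 5%nat) /\ K' 6%nat = pedal a u (K 6%nat).
Proof.
  intros Hcl. pose proof Hcl as [Hcp _].
  destruct (on_line K' Hcp) as [a [u [Hu [H4 [H5 H6]]]]].
  exists a, u.
  pose proof (alpha_pos k) as Hal.
  assert (HA : alpha k * (norm2 (dlt K K' 4) + norm2 (dlt K K' 5) + norm2 (dlt K K' 6)) <= Qk k K K')
    by (eapply Rle_trans; [apply Fk_ge | apply Q_ge]).
  assert (HB : forall b v, norm2 v <> 0 ->
    Qk k K K' <= alpha k * (line_dist2 b v (K 4%nat) + line_dist2 b v (K 5%nat) + line_dist2 b v (K 6%nat))).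
  { intros b v Hv.
    set (g := centroid (K 4%nat) (K 5%nat) (K 6%nat)).
    set (Yp := fun i => pedal g v (K i)).
    assert (HcpY : CP (fixb k K Yp) = 0).
    { rewrite CP_fixb. apply (CP_line Yp g v (K 4%nat) (K 5%nat) (K 6%nat)); auto. }
    pose proof (closest_le k K K' _ Hcl HcpY) as Hle.
    rewrite Q_fix in Hle. unfold Fk in Hle.
    change (dlt K Yp 4) with (vsub (K 4%nat) (pedal g v (K 4%nat))) in Hle.
    change (dlt K Yp 5) with (vsub (K 5%nat) (pedal g v (K 5%nat))) in Hle.
    change (dlt K Yp 6) with (vsub (K 6%nat) (pedal g v (K 6%nat))) in Hle.
    pose proof (sum_zero (K 4%nat) (K 5%nat) (K 6%nat) v Hv) as SZ. cbv zeta in SZ. fold g in SZ.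
    rewrite SZ in Hle.
    pose proof (centroid_le (K 4%nat) (K 5%nat) (K 6%nat) b v Hv) as Hc.
    fold g in Hc.
    change (norm2 (vsub (K 4%nat) (pedal g v (K 4%nat)))) with (line_dist2 g v (K 4%nat)) in Hle.
    change (norm2 (vsub (K 5%nat) (pedal g v (K 5%nat)))) with (line_dist2 g v (K 5%nat)) in Hle.
    change (norm2 (vsub (K 6%nat) (pedal g v (K 6%nat)))) with (line_dist2 g v (K 6%nat)) in Hle.
    apply Rmult_le_compat_l with (r := alpha k) in Hc; [|lra]. lra. }
  assert (HC : forall i, pedal a u (K' i) = K' i ->
     norm2 (dlt K K' i) = line_dist2 a u (K i) + norm2 (vsub (pedal a u (K i)) (K' i))).
  { intros i Hi. unfold dlt. rewrite <- Hi. apply pyth; auto. }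
  rewrite (HC 4%nat H4), (HC 5%nat H5), (HC 6%nat H6) in HA.
  pose proof (norm2_ge0 (vsub (pedal a u (K 4%nat)) (K' 4%nat))) as P4.
  pose proof (norm2_ge0 (vsub (pedal a u (K 5%nat)) (K' 5%nat))) as P5.
  pose proof (norm2_ge0 (vsub (pedal a u (K 6%nat)) (K' 6%nat))) as P6.
  split; [split|].
  - intro E; subst u. apply Hu. unfold norm2, dot; simpl; ring.
  - intros b v Hv. apply norm2_nz in Hv. specialize (HB b v Hv).
    apply Rmult_le_reg_l with (alpha k); auto. nra.
  - specialize (HB a u Hu).
    assert (Z : alpha k * (norm2 (vsub (pedal a u (K 4%nat)) (K' 4%nat)) +
       norm2 (vsub (pedal a u (K 5%nat)) (K' 5%nat)) + norm2 (vsub (pedal a u (K 6%nat)) (K' 6%nat))) <= 0) by nra.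
    assert (Z2 : norm2 (vsub (pedal a u (K 4%nat)) (K' 4%nat)) +
       norm2 (vsub (pedal a u (K 5%nat)) (K' 5%nat)) + norm2 (vsub (pedal a u (K 6%nat)) (K' 6%nat)) <= 0).
    { apply Rmult_le_reg_l with (alpha k); auto. lra. }
    repeat split; symmetry; apply norm2_zero; lra.
Qed.

Theorem theorem1 :
  forall (k1 k2 k3 p4 p5 p6 : point) (kind : dist_kind),
    (forall (c s : R) (t : point) (K' : config),
        in_SO2 c s ->
        is_closest kind (rpr_config k1 k2 k3 p4 p5 p6 c s t) K' ->
        let K := rpr_config k1 k2 k3 p4 p5 p6 c s t in
        exists a u : point,
          is_regression_line (K 4%nat) (K 5%nat) (K 6%nat) a u /\
          K' 4%nat = pedal a u (K 4%nat) /\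
          K' 5%nat = pedal a u (K 5%nat) /\
          K' 6%nat = pedal a u (K 6%nat)) /\
    (forall (c1 s1 c2 s2 : R) (t1 t2 : point) (K1' : config),
        in_SO2 c1 s1 -> in_SO2 c2 s2 ->
        is_closest kind (rpr_config k1 k2 k3 p4 p5 p6 c1 s1 t1) K1' ->
        exists K2' : config,
          is_closest kind (rpr_config k1 k2 k3 p4 p5 p6 c2 s2 t2) K2' /\
          Dist kind (rpr_config k1 k2 k3 p4 p5 p6 c2 s2 t2) K2'
          = Dist kind (rpr_config k1 k2 k3 p4 p5 p6 c1 s1 t1) K1').
Proof.
  intros k1 k2 k3 p4 p5 p6 kind. split.
  - intros c s t K' _ Hcl K. exact (part1 kind K K' Hcl).
  - intros c1 s1 c2 s2 t1 t2 K1' H1 H2 Hcl.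
    destruct (transfer kind k1 k2 k3 p4 p5 p6 c1 s1 t1 c2 s2 t2 K1' H1 H2) as [Hz1 Hz2].
    set (K2' := fixb kind (rpr_config k1 k2 k3 p4 p5 p6 c2 s2 t2) _) in Hz1, Hz2.
    pose proof Hcl as [Hcp1 _].
    assert (Hback : forall K'', CP K'' = 0 ->
       Qk kind (rpr_config k1 k2 k3 p4 p5 p6 c1 s1 t1) K1' <= Qk kind (rpr_config k1 k2 k3 p4 p5 p6 c2 s2 t2) K'').
    { intros K'' HK.
      destruct (transfer kind k1 k2 k3 p4 p5 p6 c2 s2 t2 c1 s1 t1 K'' H2 H1) as [W1 W2].
      eapply Rle_trans; [|exact W2]. apply closest_le; auto. rewrite W1; auto. }
    assert (Hcp2 : CP K2' = 0) by (rewrite Hz1; auto).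
    pose proof (Hback K2' Hcp2) as Hge.
    exists K2'. split.
    + split; auto. intros K'' HK. rewrite !Dist_Qk. apply sqrt_le_1_alt.
      pose proof (Hback K'' HK). lra.
    + rewrite !Dist_Qk. f_equal. lra.
Qed.
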